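(* Let $n_0,n_1,r$ be positive integers. If there exist integers $t$ and $l$ with $t\ge r$ and $0\le l\le t$ such that $$2^t e^{-\frac{(l)_r}{(t)_r}n_1}+2^t e^{-\frac{(t-l)_r}{(t)_r}n_0}\le 1,$$ then $ch(K_{n_0,n_1})>r$.
   Context: For an integer $a$ and a positive integer $r$, $(a)_r=a(a-1)\cdots(a-r+1)$ denotes the falling factorial. For a graph $G=(V,E)$, the choice number $ch(G)$ is the minimum integer $k$ such that for every assignment of a list $S(v)$ of at least $k$ colors to each vertex $v\in V$, there is a proper vertex coloring of $G$ assigning to each vertex $v$ a color from $S(v)$. $K_{n_0,n_1}$ denotes the complete bipartite graph with parts of sizes $n_0$ and $n_1$. *)

(* Defs.v *)
From Stdlib Require Import Reals.
From mathcomp Require Import all_boot.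
Set Implicit Arguments. Unset Strict Implicit. Unset Printing Implicit Defensive.

(* A (simple) graph is given by a symmetric irreflexive relation [e] on a finite
   vertex type [T]. Colors are natural numbers; a list assignment gives each
   vertex a finite list of colors [S v]; its number of colors is the number of
   distinct entries, [size (undup (S v))]. *)

Definition proper_list_coloring (T : finType) (e : rel T)
  (S : T -> seq nat) (c : T -> nat) : Prop :=
  (forall v, c v \in S v) /\ (forall u v, e u v -> c u != c v).

Definition choosable (T : finType) (e : rel T) (k : nat) : Prop :=
  forall S : T -> seq nat, (forall v, k <= size (undup (S v))) ->
    exists c : T -> nat, proper_list_coloring e S c.

(* ch(G) > r : the minimum k such that G is k-choosable exceeds r,
   i.e. every k for which G is k-choosable satisfies k > r. *)
Definition choice_number_gt (T : finType) (e : rel T) (r : nat) : Prop :=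
  forall k, choosable e k -> r < k.

Definition Kbip_rel (n0 n1 : nat) : rel ('I_n0 + 'I_n1)%type :=
  fun u v => match u, v with
             | inl _, inr _ | inr _, inl _ => true
             | _, _ => false
             end.

(* Main.v *)
Require Import Defs.
From Stdlib Require Import Reals Lra.
From mathcomp Require Import all_boot zify.
Set Implicit Arguments. Unset Strict Implicit. Unset Printing Implicit Defensive.

Lemma card_sets_ord t : #|{: {set 'I_t}}| = 2 ^ t.
Proof. by rewrite -cardsT -powersetT card_powerset cardsT card_ord. Qed.

Lemma union_bound (X : finType) (I : Type) (s : seq I) (F : I -> {set X}) :
  #|\bigcup_(i <- s) F i| <= \sum_(i <- s) #|F i|.
Proof.
elim: s => [|x s IH]; first by rewrite !big_nil cards0.
rewrite !big_cons; apply: leq_trans (leq_add (leqnn _) IH).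
exact: (leq_card_setU _ _).1.
Qed.

Unset Implicit Arguments.
Definition Dr t r := [set S : {set 'I_t} | #|S| == r].
Definition E0 t r (A : {set 'I_t}) := [set S : {set 'I_t} | S \subset ~: A & #|S| == r].
Definition E1 t r (A : {set 'I_t}) := [set S : {set 'I_t} | S \subset A & #|S| == r].
Definition Omega t r n0 n1 :=
  setX [set g : {ffun 'I_n0 -> {set 'I_t}} | g \in ffun_on (Dr t r)]
       [set g : {ffun 'I_n1 -> {set 'I_t}} | g \in ffun_on (Dr t r)].
Definition Gs t r n0 n1 (A : {set 'I_t}) :=
  setX [set g : {ffun 'I_n0 -> {set 'I_t}} | g \in ffun_on (Dr t r :\: E0 t r A)]
       [set g : {ffun 'I_n1 -> {set 'I_t}} | g \in ffun_on (Dr t r :\: E1 t r A)].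

Lemma card_Dr t r : #|Dr t r| = 'C(t, r).
Proof. by rewrite /Dr card_draws card_ord. Qed.

Lemma card_Omega t r n0 n1 : #|Omega t r n0 n1| = ('C(t, r) ^ n0 * 'C(t, r) ^ n1)%N.
Proof. by rewrite /Omega cardsX !cardsE !card_ffun_on !card_ord card_Dr. Qed.

Lemma card_Gs t r n0 n1 A : #|Gs t r n0 n1 A| =
  (('C(t, r) - 'C(t - #|A|, r)) ^ n0 * ('C(t, r) - 'C(#|A|, r)) ^ n1)%N.
Proof.
rewrite /Gs cardsX !cardsE !card_ffun_on !card_ord !cardsDS.
- rewrite card_Dr /E0 /E1 !cards_draws.
  have -> : #|~: A| = t - #|A| by have := cardsC A; rewrite card_ord; lia.
  done.
- by apply/subsetP => S; rewrite !inE => /andP[].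
- by apply/subsetP => S; rewrite !inE => /andP[].
Qed.

Lemma sum_arg t (F : {set 'I_t} -> nat) X :
  (forall A, F A * 2 ^ t < X) -> \sum_A F A < X.
Proof.
move=> H.
have HX : 0 < X by have := H set0; lia.
have : (\sum_A F A) * 2 ^ t < X * 2 ^ t.
  rewrite big_distrl /=.
  apply: (@leq_trans (\sum_(A : {set 'I_t}) X.-1).+1).
    rewrite ltnS; apply: leq_sum => A _; have := H A; lia.
  rewrite sum_nat_const card_sets_ord.
  have : 0 < 2 ^ t by rewrite expn_gt0.
  nia.
by rewrite ltn_pmul2r // expn_gt0.
Qed.

Lemma exists_w t r n0 n1 :
  \sum_(A : {set 'I_t}) #|Gs t r n0 n1 A| < #|Omega t r n0 n1| ->
  exists w, w \in Omega t r n0 n1 /\ forall A, w \notin Gs t r n0 n1 A.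
Proof.
move=> H.
set U := \bigcup_(A : {set 'I_t}) Gs t r n0 n1 A.
have HU : #|U| < #|Omega t r n0 n1| by apply: leq_ltn_trans (union_bound _ _) H.
have : 0 < #|Omega t r n0 n1 :\: U|.
  rewrite cardsD; have := subset_leq_card (subsetIr (Omega t r n0 n1) U); lia.
case/card_gt0P => w; rewrite inE => /andP[HwU Hw].
exists w; split => // A; apply: contra HwU => HA.
by apply/bigcupP; exists A.
Qed.
Set Implicit Arguments.

Open Scope R_scope.
Lemma INR_muln m n : INR (m * n)%N = INR m * INR n.
Proof. by rewrite -multE mult_INR. Qed.

Lemma INR_expn m n : INR (m ^ n)%N = INR m ^ n.
Proof. elim: n => [|n IH]; first by rewrite expn0. by rewrite expnS INR_muln IH. Qed.

Lemma INR_subn m n : (n <= m)%N -> INR (m - n)%N = INR m - INR n.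
Proof. move=> /leP H; by rewrite -minusE minus_INR. Qed.

Lemma pow_exp_le (x : R) (n : nat) : 0 <= 1 - x -> (1 - x) ^ n <= exp (- (x * INR n)).
Proof.
move=> Hx; elim: n => [|n IH].
  rewrite /= Rmult_0_r Ropp_0 exp_0; lra.
rewrite S_INR; change ((1 - x) ^ n.+1) with ((1 - x) * (1 - x) ^ n).
replace (- (x * (INR n + 1))) with (- x + - (x * INR n)) by ring.
rewrite exp_plus.
apply: Rmult_le_compat => //; first exact: pow_le.
have := exp_ineq1_le (- x); lra.
Qed.

Lemma pow_le1 (x : R) (n : nat) : 0 <= x <= 1 -> x ^ n <= 1.
Proof. move=> H; rewrite -(pow1 n); exact: pow_incr. Qed.

Lemma real_core (Nr c0 c1 E0 E1 P : R) (n0 n1 : nat) :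
  0 < Nr -> 0 <= c0 <= Nr -> 0 <= c1 <= Nr -> 0 < P -> 0 < E0 -> 0 < E1 ->
  P * E1 + P * E0 <= 1 ->
  ((1 - c1 / Nr) ^ n1 <= E1 \/ (1 - c0 / Nr) ^ n0 <= E0) ->
  (Nr - c0) ^ n0 * (Nr - c1) ^ n1 * P < Nr ^ n0 * Nr ^ n1.
Proof.
move=> HN Hc0 Hc1 HP HE0 HE1 Hsum Hor.
have e0 : Nr - c0 = Nr * (1 - c0 / Nr) by field; lra.
have e1 : Nr - c1 = Nr * (1 - c1 / Nr) by field; lra.
rewrite e0 e1 !Rpow_mult_distr.
set x0 := (1 - c0 / Nr) ^ n0. set x1 := (1 - c1 / Nr) ^ n1.
have h0 : 0 <= 1 - c0 / Nr <= 1.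
  split.
  - apply: (Rmult_le_reg_r Nr) => //. field_simplify; lra.
  - have : 0 <= c0 / Nr by apply: Rmult_le_pos; [lra | apply/Rlt_le/Rinv_0_lt_compat].
    lra.
have h1 : 0 <= 1 - c1 / Nr <= 1.
  split.
  - apply: (Rmult_le_reg_r Nr) => //. field_simplify; lra.
  - have : 0 <= c1 / Nr by apply: Rmult_le_pos; [lra | apply/Rlt_le/Rinv_0_lt_compat].
    lra.
have X0 : 0 <= x0 <= 1 by split; [apply: pow_le; lra | apply: pow_le1].
have X1 : 0 <= x1 <= 1 by split; [apply: pow_le; lra | apply: pow_le1].
have Hprod : x0 * x1 * P < 1.
  case: Hor => H.
  - have : x0 * x1 <= E1.
      apply: Rle_trans (_ : 1 * E1 <= E1); last lra.
      apply: Rmult_le_compat; try lra; exact: H.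
    move=> H2.
    have : x0 * x1 * P <= P * E1 by rewrite Rmult_comm; apply: Rmult_le_compat_l; lra.
    have : 0 < P * E0 by apply: Rmult_lt_0_compat.
    lra.
  - have : x0 * x1 <= E0.
      apply: Rle_trans (_ : E0 * 1 <= E0); last lra.
      apply: Rmult_le_compat; try lra; exact: H.
    move=> H2.
    have : x0 * x1 * P <= P * E0 by rewrite Rmult_comm; apply: Rmult_le_compat_l; lra.
    have : 0 < P * E1 by apply: Rmult_lt_0_compat.
    lra.
have Hpos : 0 < Nr ^ n0 * Nr ^ n1 by apply: Rmult_lt_0_compat; apply: pow_lt.
replace (Nr ^ n0 * x0 * (Nr ^ n1 * x1) * P) with ((Nr ^ n0 * Nr ^ n1) * (x0 * x1 * P)) by ring.
rewrite -{2}(Rmult_1_r (Nr ^ n0 * Nr ^ n1)).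
exact: Rmult_lt_compat_l.
Qed.

Lemma exp_mono x y : x <= y -> exp x <= exp y.
Proof. case/Rle_lt_or_eq => [H|->]; [left; exact: exp_increasing | right; done]. Qed.

Lemma ratio_le (t r l a n : nat) : (r <= t)%N -> (l <= a)%N -> (a <= t)%N ->
  (1 - INR 'C(a, r) / INR 'C(t, r)) ^ n <=
  exp (- (INR (l ^_ r) / INR (t ^_ r) * INR n)).
Proof.
move=> Hrt Hla Hat.
have HN : 0 < INR 'C(t, r) by apply: lt_0_INR; apply/ltP; rewrite bin_gt0.
have Hf : 0 < INR r`! by apply: lt_0_INR; apply/ltP; rewrite fact_gt0.
have Hca : INR 'C(a, r) <= INR 'C(t, r) by apply: le_INR; apply/leP; exact: leq_bin2l.
have Hcl : INR 'C(l, r) <= INR 'C(a, r) by apply: le_INR; apply/leP; exact: leq_bin2l.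
apply: Rle_trans; first apply: pow_exp_le.
  apply: (Rmult_le_reg_r (INR 'C(t, r))) => //. field_simplify; lra.
apply: exp_mono; apply: Ropp_le_contravar; apply: Rmult_le_compat_r; first exact: pos_INR.
rewrite -!bin_ffact !INR_muln.
have -> : INR 'C(l, r) * INR r`! / (INR 'C(t, r) * INR r`!) = INR 'C(l, r) / INR 'C(t, r).
  field; lra.
apply: Rmult_le_compat_r => //. by apply/Rlt_le/Rinv_0_lt_compat.
Qed.

Lemma term_bound (t r l n0 n1 a : nat) : (0 < r)%N -> (r <= t)%N -> (l <= t)%N -> (a <= t)%N ->
  Rle (Rplus (Rmult (pow (INR 2) t)
                       (exp (Ropp (Rmult (Rdiv (INR (l ^_ r)) (INR (t ^_ r))) (INR n1)))))
                (Rmult (pow (INR 2) t)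
                       (exp (Ropp (Rmult (Rdiv (INR ((t - l) ^_ r)) (INR (t ^_ r))) (INR n0))))))
         R1 ->
  ((('C(t, r) - 'C(t - a, r)) ^ n0 * ('C(t, r) - 'C(a, r)) ^ n1) * 2 ^ t
     < 'C(t, r) ^ n0 * 'C(t, r) ^ n1)%N.
Proof.
move=> Hr Hrt Hlt Hat H.
apply/ltP; apply: INR_lt.
rewrite !INR_muln !INR_expn !INR_subn; try (apply: leq_bin2l; exact: leq_subr); try exact: leq_bin2l.
apply: (real_core _ _ _ _ _ _ H).
- apply: lt_0_INR; apply/ltP; rewrite bin_gt0 //.
- split; [exact: pos_INR | apply: le_INR; apply/leP; apply: leq_bin2l; exact: leq_subr].
- split; [exact: pos_INR | apply: le_INR; apply/leP; exact: leq_bin2l].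
- apply: pow_lt; apply: lt_0_INR; apply/ltP; done.
- exact: exp_pos.
- exact: exp_pos.
case: (leqP l a) => Hla.
- left; exact: ratio_le.
- right.
  apply: ratio_le => //; last exact: leq_subr.
  apply: leq_sub2l; exact: ltnW.
Qed.
Close Scope R_scope.

Theorem lemma3p1 (n0 n1 r : nat) :
  (0 < n0)%N -> (0 < n1)%N -> (0 < r)%N ->
  (exists t l : nat, (r <= t)%N /\ (l <= t)%N /\
     Rle (Rplus (Rmult (pow (INR 2) t)
                       (exp (Ropp (Rmult (Rdiv (INR (l ^_ r)) (INR (t ^_ r))) (INR n1)))))
                (Rmult (pow (INR 2) t)
                       (exp (Ropp (Rmult (Rdiv (INR ((t - l) ^_ r)) (INR (t ^_ r))) (INR n0))))))
         R1) ->
  choice_number_gt (@Kbip_rel n0 n1) r.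
Proof.
move=> Hn0 Hn1 Hr [t [l [Hrt [Hlt H]]]] k Hk.
rewrite ltnNge; apply/negP => Hkr.
have Hsum : \sum_(A : {set 'I_t}) #|Gs t r n0 n1 A| < #|Omega t r n0 n1|.
  apply: sum_arg => A; rewrite card_Gs card_Omega.
  apply: (@term_bound t r l n0 n1 #|A| Hr Hrt Hlt _ H).
  by have := max_card A; rewrite card_ord.
have [w [Hw HwG]] := @exists_w t r n0 n1 Hsum.
move: Hw; rewrite inE => /andP[]; rewrite !inE => /ffun_onP Hw1 /ffun_onP Hw2.
pose S (v : ('I_n0 + 'I_n1)%type) : seq nat :=
  match v with
  | inl i => map (@nat_of_ord t) (enum (w.1 i))
  | inr j => map (@nat_of_ord t) (enum (w.2 j))
  end.
have HS : forall v, k <= size (undup (S v)).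
  case=> [i|j] /=.
  - rewrite undup_id ?(map_inj_uniq val_inj) ?enum_uniq // size_map -cardE.
    by move: (Hw1 i); rewrite inE => /eqP ->.
  - rewrite undup_id ?(map_inj_uniq val_inj) ?enum_uniq // size_map -cardE.
    by move: (Hw2 j); rewrite inE => /eqP ->.
have [c [Hc Hp]] := Hk S HS.
pose A := [set x : 'I_t | [exists i : 'I_n0, c (inl i) == val x]].
apply: (negP (HwG A)).
rewrite inE; apply/andP; split; rewrite inE; apply/ffun_onP.
- move=> i; rewrite in_setD Hw1 andbT /E0 !inE.
  have := Hc (inl i); rewrite /S /= => /mapP[x]; rewrite mem_enum => Hx Hcx.
  apply/negP => /andP[/subsetP /(_ x Hx)].
  by rewrite !inE => /existsPn /(_ i); rewrite Hcx eqxx.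
- move=> j; rewrite in_setD Hw2 andbT /E1 !inE.
  have := Hc (inr j); rewrite /S /= => /mapP[x]; rewrite mem_enum => Hx Hcx.
  apply/negP => /andP[/subsetP /(_ x Hx)]; rewrite !inE => /existsP[i /eqP Hi] _.
  have := Hp (inl i) (inr j) erefl.
  by rewrite Hi Hcx eqxx.
Qed.
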